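(* Let $p,q\in[0,1]$ be real numbers and $R\in\{\mathrm{ML},\mathrm{wML},\mathrm C,\mathrm S\}$. Then every recursive temporal selection process belongs to $\mathscr S^{p,q}_{\mathscr F_R}$.
   Context: $\mathbb N_0=\{0,1,2,\dots\}$. $\mathbb S=\bigcup_{n\in\mathbb N_0}\{0,1\}^n$ is the set of situations, $\square$ the empty sequence, $|s|$ the length, $sx$ concatenation. For $r\in[0,1]$ and $f:\{0,1\}\to\mathbb R$, $E_r(f)=rf(1)+(1-r)f(0)$. A real process is $F:\mathbb S\to\mathbb R$, $\Delta F(s)$ is $x\mapsto F(sx)-F(s)$. A test process is a non-negative real process with $F(\square)=1$. A multiplier process $D$ assigns to each $s$ a function $D(s):\{0,1\}\to[0,\infty)$ and generates the test process $F(\square)=1$, $F(sx)=F(s)D(s)(x)$. Computability: maps from countable effectively encoded domains ($\mathbb N_0$, $\mathbb S$, products with $\{0,1\}$, $\mathbb N_0$) to $\mathbb N_0$, $\mathbb Q$ or $\{0,1\}$ are recursive if Turing-computable; a real map $r$ is lower semicomputable if $r(d)=\lim_nq(d,n)$ for a recursive rational $q$ non-decreasing in $n$. $\mathscr F_{\mathrm{ML}}$: lower semicomputable test processes; $\mathscr F_{\mathrm{wML}}$: test processes generated by lower semicomputable multiplier processes; $\mathscr F_{\mathrm C}=\mathscr F_{\mathrm S}$: positive, rational-valued, recursive test processes. A selection process is a map $S:\mathbb S\to\{0,1\}$; temporal if $S(s)$ depends only on $|s|$ (written $S(n)$). For a real process $F$ and $r\in[0,1]$, $S^r_F$ is the temporal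 selection process with $S^r_F(n)=1$ if $E_r(\Delta F(s))>0$ for some $s$ with $|s|=n$, and $0$ otherwise. For a set $\mathscr F$ of real processes, $\mathscr S^{p,q}_{\mathscr F}=\{S^r_F:F\in\mathscr F,\ r\in\{p,q\}\}$. *)

(* Defs.v *)
From Stdlib Require Import Reals List Arith ClassicalEpsilon.
Import ListNotations.
Open Scope R_scope.

Inductive prf : Type :=
| PZero : prf
| PSucc : prf
| PProj : nat -> prf               (* i-th argument (0-based) *)
| PComp : prf -> list prf -> prf
| PRec  : prf -> prf -> prf        (* primitive recursion on first argument *)
| PMu   : prf -> prf.              (* unbounded minimisation on first argument *)

Inductive eval : prf -> list nat -> nat -> Prop :=
| ev_zero v : eval PZero v 0
| ev_succ x v : eval PSucc (x :: v) (S x)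
| ev_proj i v : (i < length v)%nat -> eval (PProj i) v (nth i v 0%nat)
| ev_comp f gs v ws y : evals gs v ws -> eval f ws y -> eval (PComp f gs) v y
| ev_rec0 f g v y : eval f v y -> eval (PRec f g) (0%nat :: v) y
| ev_recS f g n v z y :
    eval (PRec f g) (n :: v) z -> eval g (n :: z :: v) y ->
    eval (PRec f g) (S n :: v) y
| ev_mu f v n :
    eval f (n :: v) 0 ->
    (forall m, (m < n)%nat -> exists k, eval f (m :: v) (S k)) ->
    eval (PMu f) v n
with evals : list prf -> list nat -> list nat -> Prop :=
| evs_nil v : evals [] v []
| evs_cons g gs v w ws : eval g v w -> evals gs v ws -> evals (g :: gs) v (w :: ws).

(* s ++ [x] is the concatenation sx.  Bijective encoding:              *)
(*   code [] = 0,   code (s ++ [x]) = 2 * code s + 1 + x.              *)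

Definition situation := list bool.

Definition code (s : situation) : nat :=
  fold_left (fun acc (b : bool) => (2 * acc + 1 + Nat.b2n b)%nat) s 0%nat.

(* Recursive maps (Turing computable = mu-recursive) on the encoded domains *)

Definition recursive_S (f : situation -> nat) : Prop :=
  exists t, forall s, eval t [code s] (f s).

Definition recursive_SN (f : situation -> nat -> nat) : Prop :=
  exists t, forall s n, eval t [code s; n] (f s n).

Definition recursive_SBN (f : situation -> bool -> nat -> nat) : Prop :=
  exists t, forall s x n, eval t [code s; Nat.b2n x; n] (f s x n).

(* Rationals represented as (a - b) / (c + 1) with a b c natural numbers *)
Definition ratR (a b c : nat) : R := (INR a - INR b) / (INR c + 1).

Definition recursive_rat_S (F : situation -> R) : Prop :=
  exists a b c : situation -> nat,
    recursive_S a /\ recursive_S b /\ recursive_S c /\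
    forall s, F s = ratR (a s) (b s) (c s).

Definition lower_semicomputable_S (F : situation -> R) : Prop :=
  exists a b c : situation -> nat -> nat,
    recursive_SN a /\ recursive_SN b /\ recursive_SN c /\
    (forall s n, ratR (a s n) (b s n) (c s n) <= ratR (a s (S n)) (b s (S n)) (c s (S n))) /\
    (forall s, Un_cv (fun n => ratR (a s n) (b s n) (c s n)) (F s)).

Definition lower_semicomputable_SB (D : situation -> bool -> R) : Prop :=
  exists a b c : situation -> bool -> nat -> nat,
    recursive_SBN a /\ recursive_SBN b /\ recursive_SBN c /\
    (forall s x n, ratR (a s x n) (b s x n) (c s x n)
                   <= ratR (a s x (S n)) (b s x (S n)) (c s x (S n))) /\
    (forall s x, Un_cv (fun n => ratR (a s x n) (b s x n) (c s x n)) (D s x)).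

Definition real_process := situation -> R.

Definition E (r : R) (f : bool -> R) : R := r * f true + (1 - r) * f false.

Definition Delta (F : real_process) (s : situation) : bool -> R :=
  fun x => F (s ++ [x]) - F s.

Definition test_process (F : real_process) : Prop :=
  (forall s, 0 <= F s) /\ F [] = 1.

Definition multiplier_process (D : situation -> bool -> R) : Prop :=
  forall s x, 0 <= D s x.

Definition generated_by (D : situation -> bool -> R) (F : real_process) : Prop :=
  F [] = 1 /\ forall s x, F (s ++ [x]) = F s * D s x.

Definition F_ML (F : real_process) : Prop :=
  test_process F /\ lower_semicomputable_S F.

Definition F_wML (F : real_process) : Prop :=
  exists D, multiplier_process D /\ lower_semicomputable_SB D /\ generated_by D F.

Definition F_C (F : real_process) : Prop :=
  test_process F /\ (forall s, 0 < F s) /\ recursive_rat_S F.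

Definition F_S (F : real_process) : Prop := F_C F.

Inductive randomness := ML | wML | Cr | Sr.

Definition F_of (Rk : randomness) : real_process -> Prop :=
  match Rk with
  | ML => F_ML
  | wML => F_wML
  | Cr => F_C
  | Sr => F_S
  end.

Definition selection_process := situation -> bool.

Definition temporal (Sel : selection_process) : Prop :=
  forall s t, length s = length t -> Sel s = Sel t.

Definition recursive_selection (Sel : selection_process) : Prop :=
  recursive_S (fun s => Nat.b2n (Sel s)).

Definition sel_cond (r : R) (F : real_process) (n : nat) : Prop :=
  exists s, length s = n /\ E r (Delta F s) > 0.

Definition S_rF (r : R) (F : real_process) : selection_process :=
  fun s => if excluded_middle_informative (sel_cond r F (length s)) then true else false.

Definition S_pq (p q : R) (FF : real_process -> Prop) (Sel : selection_process) : Prop :=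
  exists F r, FF F /\ (r = p \/ r = q) /\ Sel = S_rF r F.

(* Main.v *)
Require Import Defs.
From Stdlib Require Import Reals.
From Stdlib Require Import List Arith Lia Lra FunctionalExtensionality.
Import ListNotations.
Open Scope R_scope.

Lemma eval_eq t v y y' : eval t v y -> y = y' -> eval t v y'.
Proof. intros H ->; exact H. Qed.

Lemma proj0 x v : eval (PProj 0) (x :: v) x.
Proof. apply (ev_proj 0 (x :: v)); simpl; lia. Qed.

Lemma comp1 f g v w y : eval g v w -> eval f [w] y -> eval (PComp f [g]) v y.
Proof. intros; eapply ev_comp; [|eassumption]. constructor; [assumption|constructor]. Qed.

Lemma comp2 f g h v w u y : eval g v w -> eval h v u -> eval f [w; u] y ->
  eval (PComp f [g; h]) v y.
Proof.
  intros; eapply ev_comp; [|eassumption].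
  constructor; [assumption|]. constructor; [assumption|constructor].
Qed.

Definition addP := PRec (PProj 0) (PComp PSucc [PProj 1]).
Lemma addP_spec n y : eval addP [n; y] (n + y)%nat.
Proof.
  induction n.
  - apply ev_rec0. apply proj0.
  - eapply ev_recS; [exact IHn|].
    apply comp1 with (w := (n + y)%nat).
    + apply (ev_proj 1 [n; (n + y)%nat; y]); simpl; lia.
    + constructor.
Qed.

Fixpoint constP (k : nat) : prf :=
  match k with 0 => PZero | S k' => PComp PSucc [constP k'] end.
Lemma constP_spec k v : eval (constP k) v k.
Proof.
  induction k; simpl.
  - constructor.
  - eapply comp1; [exact IHk|constructor].
Qed.

Lemma Un_cv_const c : Un_cv (fun _ => c) c.
Proof. intros eps H; exists 0%nat; intros; rewrite R_dist_eq; lra. Qed.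

Lemma code_app s x : code (s ++ [x]) = (2 * code s + 1 + Nat.b2n x)%nat.
Proof. unfold code; rewrite fold_left_app; reflexivity. Qed.

Lemma sel_eq (Sel : selection_process) (F : real_process) (r : R) :
  temporal Sel ->
  (forall s, Sel s = true -> Defs.E r (Defs.Delta F s) > 0) ->
  (forall s, Sel s = false -> ~ Defs.E r (Defs.Delta F s) > 0) ->
  Sel = S_rF r F.
Proof.
  intros Ht H1 H2; apply functional_extensionality; intro s.
  unfold S_rF; destruct (ClassicalEpsilon.excluded_middle_informative _) as [[s' [Hl He]] | Hn].
  - rewrite (Ht s s' (eq_sym Hl)). destruct (Sel s') eqn:E'; auto.
    exfalso; exact (H2 s' E' He).
  - destruct (Sel s) eqn:E'; auto. exfalso; apply Hn; exists s; auto.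
Qed.

Section Q.
Variable Sel : selection_process.
Definition sig s := Nat.b2n (Sel s).
Definition lam := if Sel [] then 1 else / 3.
Definition Fq (s : situation) : R :=
  lam * ((INR (2 * code s + 3) - INR (2 * sig s)) / (INR (code s) + 1)).

Lemma lam_pos : 0 < lam.
Proof. unfold lam; destruct (Sel []); lra. Qed.

Lemma Fq_val s : Fq s = lam * (2 + (if Sel s then -1 else 1) / (INR (code s) + 1)).
Proof.
  unfold Fq, sig. assert (0 <= INR (code s)) by apply pos_INR.
  destruct (Sel s); cbn [Nat.b2n]; rewrite !mult_INR, !plus_INR;
  replace (INR 2) with 2 by (simpl; lra); replace (INR 3) with 3 by (simpl; lra);
  try replace (INR 1) with 1 by (simpl; lra); try replace (INR 0) with 0 by (simpl; lra);
  rewrite ?mult_INR; replace (INR 2) with 2 by (simpl; lra); field; lra.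
Qed.

Lemma Fq_pos s : 0 < Fq s.
Proof.
  rewrite Fq_val. assert (0 <= INR (code s)) by apply pos_INR.
  assert (0 < / (INR (code s) + 1) <= 1).
  { split. apply Rinv_0_lt_compat; lra.
    rewrite <- Rinv_1. apply Rinv_le_contravar; lra. }
  pose proof lam_pos. unfold Rdiv.
  destruct (Sel s); apply Rmult_lt_0_compat; lra.
Qed.

Lemma Fq_child s x :
  let u := / (INR (code s) + 1) in let u' := / (INR (code (s ++ [x])) + 1) in
  0 < u' < u /\ lam * (2 - u') <= Fq (s ++ [x]) <= lam * (2 + u').
Proof.
  intros u u'.
  assert (0 <= INR (code s)) by apply pos_INR.
  assert (HM : INR (code s) + 1 <= INR (code (s ++ [x]))).
  { rewrite <- S_INR. apply le_INR. rewrite code_app. lia. }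
  assert (0 < u' < u).
  { unfold u, u'. split. apply Rinv_0_lt_compat; lra.
    apply Rinv_lt_contravar; try nra. }
  split; auto. rewrite Fq_val. pose proof lam_pos.
  unfold Rdiv. fold u'. assert (0 < lam * u') by (apply Rmult_lt_0_compat; lra). destruct (Sel (s ++ [x])); split; nra.
Qed.


Lemma Fq_true r s : 0 <= r <= 1 -> Sel s = true -> Defs.E r (Defs.Delta Fq s) > 0.
Proof.
  intros Hr Hs. unfold Defs.E, Defs.Delta.
  destruct (Fq_child s true) as [[H1 H2] [H3 H4]].
  destruct (Fq_child s false) as [[H5 H6] [H7 H8]].
  rewrite (Fq_val s), Hs. unfold Rdiv. pose proof lam_pos.
  set (u := / (INR (code s) + 1)) in *.
  set (a := / (INR (code (s ++ [true])) + 1)) in *.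
  set (b := / (INR (code (s ++ [false])) + 1)) in *.
  assert (lam * a < lam * u) by (apply Rmult_lt_compat_l; lra).
  assert (lam * b < lam * u) by (apply Rmult_lt_compat_l; lra).
  assert (D1 : Fq (s ++ [true]) - lam * (2 + -1 * u) > 0) by nra.
  assert (D0 : Fq (s ++ [false]) - lam * (2 + -1 * u) > 0) by nra.
  revert D1 D0. generalize (Fq (s ++ [true]) - lam * (2 + -1 * u)).
  generalize (Fq (s ++ [false]) - lam * (2 + -1 * u)). intros d0 d1 D1 D0.
  destruct (Req_dec r 0) as [->|Hr0]; [lra|].
  assert (0 < r * d1) by (apply Rmult_lt_0_compat; lra).
  assert (0 <= (1 - r) * d0) by (apply Rmult_le_pos; lra). lra.
Qed.

Lemma Fq_false r s : 0 <= r <= 1 -> Sel s = false -> ~ Defs.E r (Defs.Delta Fq s) > 0.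
Proof.
  intros Hr Hs. unfold Defs.E, Defs.Delta.
  destruct (Fq_child s true) as [[H1 H2] [H3 H4]].
  destruct (Fq_child s false) as [[H5 H6] [H7 H8]].
  rewrite (Fq_val s), Hs. unfold Rdiv. pose proof lam_pos.
  set (u := / (INR (code s) + 1)) in *.
  set (a := / (INR (code (s ++ [true])) + 1)) in *.
  set (b := / (INR (code (s ++ [false])) + 1)) in *.
  assert (lam * a < lam * u) by (apply Rmult_lt_compat_l; lra).
  assert (lam * b < lam * u) by (apply Rmult_lt_compat_l; lra).
  assert (D1 : Fq (s ++ [true]) - lam * (2 + 1 * u) < 0) by nra.
  assert (D0 : Fq (s ++ [false]) - lam * (2 + 1 * u) < 0) by nra.
  revert D1 D0. generalize (Fq (s ++ [true]) - lam * (2 + 1 * u)).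
  generalize (Fq (s ++ [false]) - lam * (2 + 1 * u)). intros d0 d1 D1 D0.
  assert (r * d1 <= 0) by nra.
  assert ((1 - r) * d0 <= 0) by nra. lra.
Qed.

Lemma Fq_test : test_process Fq.
Proof.
  split. intro s; left; apply Fq_pos.
  rewrite Fq_val. unfold lam. simpl code. simpl INR.
  destruct (Sel []); field.
Qed.

Lemma Fq_rat : recursive_selection Sel -> recursive_rat_S Fq.
Proof.
  intros [t0 Ht0].
  exists (fun s => (2 * code s + 3)%nat), (fun s => (2 * sig s)%nat),
    (fun s => if Sel [] then code s else (3 * code s + 2)%nat).
  split; [|split; [|split]].
  - exists (PComp addP [PProj 0; PComp addP [PProj 0; constP 3]]). intro s.
    eapply comp2; [apply proj0| |].
    + eapply comp2; [apply proj0|apply constP_spec|apply addP_spec].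
    + eapply eval_eq; [apply addP_spec|lia].
  - exists (PComp addP [t0; t0]). intro s.
    eapply comp2; [apply Ht0|apply Ht0|]. eapply eval_eq; [apply addP_spec|].
    unfold sig; lia.
  - destruct (Sel []).
    + exists (PProj 0). intro s. apply proj0.
    + exists (PComp addP [PProj 0; PComp addP [PProj 0; PComp addP [PProj 0; constP 2]]]).
      intro s.
      eapply comp2; [apply proj0| |].
      * eapply comp2; [apply proj0| |apply addP_spec].
        eapply comp2; [apply proj0|apply constP_spec|apply addP_spec].
      * eapply eval_eq; [apply addP_spec|lia].
  - intro s. unfold Fq, ratR, lam. assert (0 <= INR (code s)) by apply pos_INR.
    destruct (Sel []).
    + lra.
    + rewrite (plus_INR (3 * code s)), (mult_INR 3). replace (INR 3) with 3 by (simpl; lra).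
      replace (INR 2) with 2 by (simpl; lra). field; lra.
Qed.
End Q.

Section W.
Variable Sel : selection_process.
Definition Dw (s : situation) (x : bool) : R := ratR (S (sig Sel s)) 0 0.
Fixpoint Gw (l : list bool) : R :=
  match l with [] => 1 | x :: l' => Gw l' * Dw (rev l') x end.
Definition Fw (s : situation) : R := Gw (rev s).

Lemma Dw_val s x : Dw s x = if Sel s then 2 else 1.
Proof. unfold Dw, ratR, sig. destruct (Sel s); simpl; field. Qed.

Lemma Gw_pos l : 0 < Gw l.
Proof.
  induction l; simpl. lra. rewrite Dw_val.
  destruct (Sel (rev l)); lra.
Qed.

Lemma Fw_gen : generated_by Dw Fw.
Proof.
  split. reflexivity.
  intros s x. unfold Fw. rewrite rev_unit. simpl. rewrite rev_involutive. reflexivity.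
Qed.

Lemma Fw_E r s : Defs.E r (Defs.Delta Fw s) = if Sel s then Fw s else 0.
Proof.
  unfold Defs.E, Defs.Delta. rewrite !(proj2 Fw_gen), !Dw_val.
  destruct (Sel s); ring.
Qed.

Lemma Fw_wML : recursive_selection Sel -> F_wML Fw.
Proof.
  intros [t0 Ht0]. exists Dw. split; [|split].
  - intros s x. rewrite Dw_val. destruct (Sel s); lra.
  - exists (fun s _ _ => S (sig Sel s)), (fun _ _ _ => 0%nat), (fun _ _ _ => 0%nat).
    split; [|split; [|split; [|split]]].
    + exists (PComp PSucc [PComp t0 [PProj 0]]). intros s x n.
      eapply comp1; [|constructor]. eapply comp1; [apply proj0|apply Ht0].
    + exists PZero. intros; constructor.
    + exists PZero. intros; constructor.
    + intros; lra.
    + intros s x. apply Un_cv_const.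
  - apply Fw_gen.
Qed.
End W.

Lemma rat_lsc F : recursive_rat_S F -> lower_semicomputable_S F.
Proof.
  intros (a & b & c & [ta Ha] & [tb Hb] & [tc Hc] & HF).
  exists (fun s _ => a s), (fun s _ => b s), (fun s _ => c s).
  split; [|split; [|split; [|split]]].
  - exists (PComp ta [PProj 0]); intros; eapply comp1; [apply proj0|apply Ha].
  - exists (PComp tb [PProj 0]); intros; eapply comp1; [apply proj0|apply Hb].
  - exists (PComp tc [PProj 0]); intros; eapply comp1; [apply proj0|apply Hc].
  - intros; lra.
  - intro s; rewrite HF; apply Un_cv_const.
Qed.

Theorem proposition28 (p q : R) (Rk : randomness) (Sel : selection_process) :
  0 <= p <= 1 -> 0 <= q <= 1 ->
  temporal Sel -> recursive_selection Sel ->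
  S_pq p q (F_of Rk) Sel.
Proof.
  intros Hp Hq Ht Hr.
  assert (HC : F_C (Fq Sel)).
  { split; [apply Fq_test|split; [apply Fq_pos|apply Fq_rat; exact Hr]]. }
  assert (HSq : Sel = S_rF p (Fq Sel)).
  { apply sel_eq; auto. intros s Hs; apply Fq_true; auto.
    intros s Hs; apply Fq_false; auto. }
  destruct Rk; simpl.
  - exists (Fq Sel), p. split; [|split; auto].
    split; [apply HC|apply rat_lsc, HC].
  - exists (Fw Sel), p. split; [apply Fw_wML, Hr|split; auto].
    apply sel_eq; auto.
    + intros s Hs. rewrite Fw_E, Hs. apply Gw_pos.
    + intros s Hs. rewrite Fw_E, Hs. lra.
  - exists (Fq Sel), p. auto.
  - exists (Fq Sel), p. auto.
Qed.
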